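(* Let $p\ge 1$ and $c>0$ be constants and let $a>0$. Let $x_a$ denote the unique (maximal) solution of the initial value problem $$x'''+c\,x^p\, x''=0,\qquad x(0)=0=x'(0),\quad x''(0)=a.$$ Then $x_a$ is defined for all $t\ge 0$. *)

(* Defs.v *)
From Stdlib Require Import Reals.
From Coquelicot Require Import Coquelicot.
Open Scope R_scope.

(* |y|^p for real exponent p (with 0^p = 0, since p >= 1 in the application).
   Solutions of the IVP are nonnegative, so this only fixes a convention
   for x^p off the physically relevant region. *)
Definition powabs (y p : R) : R :=
  if Req_EM_T y 0 then 0 else Rpower (Rabs y) p.

(* Main.v *)
Require Import Defs.
From Stdlib Require Import Reals Lra Lia Psatz.
From Coquelicot Require Import Coquelicot.
Open Scope R_scope.

Lemma exp_mono_le x y : x <= y -> exp x <= exp y.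
Proof. intros [H|H]; [left; apply exp_increasing; exact H | subst; lra]. Qed.

Lemma powabs_nonneg p y : 0 <= powabs y p.
Proof. unfold powabs; destruct Req_EM_T; [lra|unfold Rpower; left; apply exp_pos]. Qed.

Lemma powabs_abs p y : powabs y p = powabs (Rabs y) p.
Proof.
  unfold powabs. destruct (Req_EM_T y 0) as [H|H]; destruct (Req_EM_T (Rabs y) 0) as [H'|H'].
  - reflexivity.
  - subst; rewrite Rabs_R0 in H'; lra.
  - exfalso; apply H; apply (Rabs_eq_0 y); exact H'.
  - rewrite Rabs_Rabsolu; reflexivity.
Qed.

Lemma powabs_le_abs p y : 1 <= p -> Rabs y <= 1 -> powabs y p <= Rabs y.
Proof.
  intros hp hy. unfold powabs. destruct Req_EM_T as [H|H].
  - apply Rabs_pos.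
  - assert (hy0 : 0 < Rabs y) by (apply Rabs_pos_lt; exact H).
    unfold Rpower.
    assert (hl : ln (Rabs y) <= 0).
    { rewrite <- ln_1. destruct hy as [hy|hy]. left; apply ln_increasing; lra. rewrite hy; lra. }
    rewrite <- (exp_ln (Rabs y)) at 2 by exact hy0.
    apply exp_mono_le. nra.
Qed.

Lemma powabs_pos_eq p y : 0 < y -> powabs y p = Rpower y p.
Proof. intros h; unfold powabs; destruct Req_EM_T; [lra|rewrite Rabs_pos_eq by lra; reflexivity]. Qed.

Lemma powabs_continuous p y : 1 <= p -> continuous (fun x => powabs x p) y.
Proof.
  intros hp. destruct (Req_EM_T y 0) as [Hy|Hy].
  - subst y. apply filterlim_locally. intros eps.
    exists (mkposreal (Rmin 1 eps) ltac:(apply Rmin_pos; [lra| apply cond_pos])).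
    intros x Hx. change (ball (powabs 0 p) eps (powabs x p)).
    unfold powabs at 1. destruct (Req_EM_T 0 0) as [_|E]; [|lra].
    change (Rabs (powabs x p - 0) < eps).
    change (Rabs (x - 0) < Rmin 1 eps) in Hx.
    rewrite Rminus_0_r in *.
    assert (h1 : Rabs x <= 1) by (pose proof (Rmin_l 1 eps); lra).
    pose proof (powabs_le_abs p x hp h1). pose proof (powabs_nonneg p x).
    rewrite Rabs_pos_eq by lra. pose proof (Rmin_r 1 eps). lra.
  - apply (continuous_ext_loc (fun x => powabs x p) (fun x : R => exp (p * ln (Rabs x))) y).
    + assert (hy0 : 0 < Rabs y) by (apply Rabs_pos_lt; exact Hy).
      exists (mkposreal (Rabs y) hy0). intros x Hx.
      change (Rabs (x - y) < Rabs y) in Hx.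
      unfold powabs. destruct Req_EM_T as [E|E].
      * subst x. rewrite Rminus_0_l, Rabs_Ropp in Hx. lra.
      * reflexivity.
    + apply (@ex_derive_continuous R_AbsRing R_NormedModule). auto_derive. split; [exact Hy|split;[apply Rabs_pos_lt; exact Hy|exact I]].
Qed.

Lemma powabs0 p : powabs 0 p = 0.
Proof. unfold powabs; destruct Req_EM_T; [reflexivity|lra]. Qed.

Lemma powabs_lip_pos p M u v : 1 <= p -> 0 < M -> 0 <= u -> u <= v -> v <= M ->
  0 <= powabs v p - powabs u p <= p * Rpower M (p-1) * (v - u).
Proof.
  intros hp hM hu huv hv.
  assert (hRM : 0 < Rpower M (p-1)) by (unfold Rpower; apply exp_pos).
  destruct huv as [huv|huv]; [|subst; lra].
  destruct hu as [hu|hu].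
  - rewrite !powabs_pos_eq by lra.
    destruct (MVT_cor2 (fun x => Rpower x p) (fun x => p * Rpower x (p-1)) u v huv) as [d [Hd1 Hd2]].
    { intros d Hd. apply derivable_pt_lim_power. lra. }
    rewrite Hd1.
    assert (0 < Rpower d (p-1)) by (unfold Rpower; apply exp_pos).
    assert (Rpower d (p-1) <= Rpower M (p-1)) by (apply Rle_Rpower_l; lra).
    assert (0 < v - u) by lra.
    split; [apply Rmult_le_pos; [apply Rmult_le_pos|]; lra|].
    apply Rmult_le_compat_r; [lra|]. apply Rmult_le_compat_l; lra.
  - subst u. rewrite powabs0.
    rewrite powabs_pos_eq by lra.
    assert (Hv : Rpower v p = v * Rpower v (p-1)).
    { rewrite <- (Rpower_1 v) at 2 by lra. rewrite <- Rpower_plus. f_equal; ring. }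
    rewrite Hv.
    assert (0 < Rpower v (p-1)) by (unfold Rpower; apply exp_pos).
    assert (Rpower v (p-1) <= Rpower M (p-1)) by (apply Rle_Rpower_l; lra).
    rewrite !Rminus_0_r.
    split; [apply Rmult_le_pos; lra|].
    apply Rle_trans with (v * Rpower M (p-1)); [apply Rmult_le_compat_l; lra|].
    rewrite (Rmult_comm v). apply Rmult_le_compat_r; [lra|]. 
    rewrite <- (Rmult_1_l (Rpower M (p-1))) at 1. apply Rmult_le_compat_r; lra.
Qed.

Lemma powabs_lip p M y1 y2 : 1 <= p -> 0 < M -> Rabs y1 <= M -> Rabs y2 <= M ->
  Rabs (powabs y1 p - powabs y2 p) <= p * Rpower M (p-1) * Rabs (y1 - y2).
Proof.
  intros hp hM h1 h2.
  assert (hRM : 0 < Rpower M (p-1)) by (unfold Rpower; apply exp_pos).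
  rewrite (powabs_abs p y1), (powabs_abs p y2).
  assert (Hd : Rabs (Rabs y1 - Rabs y2) <= Rabs (y1 - y2)) by apply Rabs_triang_inv2.
  destruct (Rle_dec (Rabs y1) (Rabs y2)) as [H|H].
  - pose proof (powabs_lip_pos p M _ _ hp hM (Rabs_pos y1) H h2).
    rewrite Rabs_left1 by lra. rewrite Rabs_left1 in Hd by lra.
    assert (0 <= p * Rpower M (p-1)) by nra.
    assert (p * Rpower M (p - 1) * (Rabs y2 - Rabs y1) <= p * Rpower M (p - 1) * Rabs (y1 - y2)) by (apply Rmult_le_compat_l; lra).
    lra.
  - pose proof (powabs_lip_pos p M (Rabs y2) (Rabs y1) hp hM (Rabs_pos y2) ltac:(lra) h1).
    rewrite Rabs_pos_eq by lra. rewrite Rabs_pos_eq in Hd by lra.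
    assert (0 <= p * Rpower M (p-1)) by nra.
    assert (p * Rpower M (p - 1) * (Rabs y1 - Rabs y2) <= p * Rpower M (p - 1) * Rabs (y1 - y2)) by (apply Rmult_le_compat_l; lra).
    lra.
Qed.

Lemma exp_lip B u v : u <= B -> v <= B -> Rabs (exp u - exp v) <= exp B * Rabs (u - v).
Proof.
  intros hu hv.
  assert (key : forall x y, x < y -> y <= B -> Rabs (exp x - exp y) <= exp B * Rabs (x - y)).
  { intros x y hxy hy.
    destruct (MVT_cor2 exp exp x y hxy) as [d [Hd1 Hd2]].
    { intros d _. apply derivable_pt_lim_exp. }
    assert (exp d <= exp B) by (apply exp_mono_le; lra).
    pose proof (exp_pos d).
    rewrite <- Rabs_Ropp, Ropp_minus_distr, Hd1, Rabs_mult, (Rabs_pos_eq (exp d)) by lra.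
    rewrite <- Rabs_Ropp with (x := x - y), Ropp_minus_distr.
    apply Rmult_le_compat_r; [apply Rabs_pos| lra]. }
  destruct (Rtotal_order u v) as [H|[H|H]].
  - apply key; lra.
  - subst. rewrite !Rminus_diag, Rabs_R0. pose proof (exp_pos B); lra.
  - rewrite <- Rabs_Ropp, Ropp_minus_distr, <- (Rabs_Ropp (u - v)), Ropp_minus_distr. apply key; lra.
Qed.

Definition cont (h : R -> R) := forall s, continuous h s.

Lemma cont_ex h a b : cont h -> ex_RInt h a b.
Proof. intros H. apply (@ex_RInt_continuous R_CompleteNormedModule). intros; apply H. Qed.

Lemma FTC h : cont h -> forall t, is_derive (fun t => RInt h 0 t) t (h t).
Proof.
  intros H t. apply (is_derive_RInt h (fun t => RInt h 0 t) 0 t).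
  - exists (mkposreal 1 Rlt_0_1). intros y _. apply (@RInt_correct R_CompleteNormedModule), cont_ex, H.
  - apply H.
Qed.

Lemma der_cont f df : (forall t, is_derive f t (df t)) -> cont f.
Proof. intros H t. apply (@ex_derive_continuous R_AbsRing R_NormedModule). eexists; apply H. Qed.

Lemma cont_RInt h : cont h -> cont (fun t => RInt h 0 t).
Proof. intros H. apply (der_cont _ h). apply FTC, H. Qed.

Lemma Rabs_opp_RInt h t : cont h -> RInt h 0 t = - RInt h t 0.
Proof. intros H. rewrite <- (@opp_RInt_swap R_CompleteNormedModule h t 0) by (apply cont_ex, H). reflexivity. Qed.

Lemma BL h t B : cont h -> (forall s, Rmin 0 t <= s <= Rmax 0 t -> Rabs (h s) <= B) ->
  Rabs (RInt h 0 t) <= B * Rabs t.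
Proof.
  intros H Hb. destruct (Rle_dec 0 t) as [Ht|Ht].
  - rewrite Rmin_left, Rmax_right in Hb by lra.
    pose proof (abs_RInt_le_const h 0 t B Ht (cont_ex h 0 t H) Hb).
    rewrite (Rabs_pos_eq t) by lra. lra.
  - rewrite Rmin_right, Rmax_left in Hb by lra.
    rewrite Rabs_opp_RInt by exact H. rewrite Rabs_Ropp.
    pose proof (abs_RInt_le_const h t 0 B ltac:(lra) (cont_ex h t 0 H) Hb).
    rewrite (Rabs_left t) by lra. lra.
Qed.

Lemma POS h t : cont h -> 0 <= t -> (forall s, 0 <= s <= t -> 0 <= h s) -> 0 <= RInt h 0 t.
Proof.
  intros H Ht Hp. apply RInt_ge_0; [exact Ht| apply cont_ex, H| intros; apply Hp; lra].
Qed.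

Lemma RInt_exp_pos L e t : 0 < L -> RInt (fun s => e * exp (L * s)) 0 t = e / L * (exp (L * t) - 1).
Proof.
  intros hL.
  rewrite (is_RInt_unique _ 0 t (minus (e / L * exp (L * t)) (e / L * exp (L * 0)))).
  - rewrite Rmult_0_r, exp_0. unfold minus, plus, opp; simpl. ring.
  - apply (@is_RInt_derive R_CompleteNormedModule (fun s => e / L * exp (L * s))).
    + intros x _. auto_derive; [exact I|]. field. lra.
    + intros x _. apply (@ex_derive_continuous R_AbsRing R_NormedModule). auto_derive. exact I.
Qed.

Lemma RInt_exp_neg L e t : 0 < L -> RInt (fun s => e * exp (- L * s)) t 0 = e / L * (exp (- L * t) - 1).
Proof.
  intros hL.
  rewrite (is_RInt_unique _ t 0 (minus (- e / L * exp (- L * 0)) (- e / L * exp (- L * t)))).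
  - rewrite Rmult_0_r, exp_0. unfold minus, plus, opp; simpl. field. lra.
  - apply (@is_RInt_derive R_CompleteNormedModule (fun s => - e / L * exp (- L * s))).
    + intros x _. auto_derive; [exact I|]. field. lra.
    + intros x _. apply (@ex_derive_continuous R_AbsRing R_NormedModule). auto_derive. exact I.
Qed.

Lemma IL h t L e : cont h -> 0 < L -> 0 <= e ->
  (forall s, Rmin 0 t <= s <= Rmax 0 t -> Rabs (h s) <= e * exp (L * Rabs s)) ->
  Rabs (RInt h 0 t) <= e / L * exp (L * Rabs t).
Proof.
  intros H hL he Hb.
  assert (Habs : cont (fun s => Rabs (h s))) by (intros s; apply continuous_Rabs_comp, H).
  assert (0 <= e / L) by (apply Rdiv_le_0_compat; lra).
  destruct (Rle_dec 0 t) as [Ht|Ht].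
  - rewrite Rmin_left, Rmax_right in Hb by lra.
    eapply Rle_trans; [apply abs_RInt_le; [exact Ht| apply cont_ex, H]|].
    eapply Rle_trans.
    + apply (RInt_le _ (fun s => e * exp (L * s))); [exact Ht|apply cont_ex, Habs| |].
      * apply (@ex_RInt_continuous R_CompleteNormedModule). intros z _. apply (@ex_derive_continuous R_AbsRing R_NormedModule). auto_derive. exact I.
      * intros x Hx. rewrite <- (Rabs_pos_eq x) at 2 by lra. apply Hb; lra.
    + rewrite RInt_exp_pos by exact hL. rewrite (Rabs_pos_eq t) by lra.
      pose proof (exp_pos (L * t)). nra.
  - rewrite Rmin_right, Rmax_left in Hb by lra.
    rewrite Rabs_opp_RInt by exact H. rewrite Rabs_Ropp.
    eapply Rle_trans; [apply abs_RInt_le; [lra| apply cont_ex, H]|].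
    eapply Rle_trans.
    + apply (RInt_le _ (fun s => e * exp (- L * s))); [lra|apply cont_ex, Habs| |].
      * apply (@ex_RInt_continuous R_CompleteNormedModule). intros z _. apply (@ex_derive_continuous R_AbsRing R_NormedModule). auto_derive. exact I.
      * intros x Hx. replace (- L * x) with (L * Rabs x) by (rewrite Rabs_left by lra; ring). apply Hb; lra.
    + rewrite RInt_exp_neg by exact hL. rewrite (Rabs_left t) by lra.
      replace (- L * t) with (L * - t) by ring.
      pose proof (exp_pos (L * - t)). nra.
Qed.

Lemma RInt_diff f1 f2 t : cont f1 -> cont f2 ->
  RInt f1 0 t - RInt f2 0 t = RInt (fun s => f1 s - f2 s) 0 t.
Proof.
  intros H1 H2. symmetry. apply (@RInt_minus R_CompleteNormedModule f1 f2 0 t); apply cont_ex; assumption.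
Qed.

Lemma cont_minus f1 f2 : cont f1 -> cont f2 -> cont (fun s => f1 s - f2 s).
Proof. intros H1 H2 s. apply (continuous_minus f1 f2 s); auto. Qed.

Lemma IL_diff f1 f2 t L e : cont f1 -> cont f2 -> 0 < L -> 0 <= e ->
  (forall s, Rmin 0 t <= s <= Rmax 0 t -> Rabs (f1 s - f2 s) <= e * exp (L * Rabs s)) ->
  Rabs (RInt f1 0 t - RInt f2 0 t) <= e / L * exp (L * Rabs t).
Proof.
  intros H1 H2 hL he Hb. rewrite RInt_diff by assumption.
  apply IL; auto. apply cont_minus; auto.
Qed.

Lemma cont_Rmax a : cont (fun t => Rmax a t).
Proof.
  intros t. apply filterlim_locally. intros eps. exists eps. intros y Hy.
  change (Rabs (y - t) < eps) in Hy. change (Rabs (Rmax a y - Rmax a t) < eps).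
  unfold Rmax; destruct (Rle_dec a y); destruct (Rle_dec a t);
  apply Rabs_def2 in Hy; apply Rabs_def1; lra.
Qed.

Section ODE.
Variables p c a : R.
Hypothesis hp : 1 <= p.
Hypothesis hc : 0 < c.
Hypothesis ha : 0 < a.

Definition Yf (f : R -> R) t := RInt (fun s => powabs (f s) p) 0 t.
Definition Gf f t := a * exp (- c * Yf f t).
Definition Vf f t := RInt (Gf f) 0 t.
Definition Tf f t := RInt (Vf f) 0 t.
Definition alph := - / (1 + a * exp c).
Definition Sop f t := Tf f (Rmax alph t).

Lemma cont_P f : cont f -> cont (fun s => powabs (f s) p).
Proof. intros H s. apply (continuous_comp f (fun y => powabs y p)); [apply H|apply powabs_continuous; exact hp]. Qed.

Lemma der_Y f : cont f -> forall t, is_derive (Yf f) t (powabs (f t) p).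
Proof. intros H. apply FTC, cont_P, H. Qed.

Lemma der_G f : cont f -> forall t, is_derive (Gf f) t (- (c * powabs (f t) p * Gf f t)).
Proof.
  intros H t.
  assert (D : is_derive (fun t => a * exp (- c * Yf f t)) t (a * ((- c * powabs (f t) p) * exp (- c * Yf f t)))).
  { apply is_derive_scal.
    apply (is_derive_comp exp (fun t => - c * Yf f t)).
    - apply is_derive_exp.
    - apply is_derive_scal. apply der_Y, H. }
  replace (- (c * powabs (f t) p * Gf f t)) with (a * ((- c * powabs (f t) p) * exp (- c * Yf f t))).
  - exact D.
  - unfold Gf. ring.
Qed.

Lemma cont_G f : cont f -> cont (Gf f).
Proof. intros H. eapply der_cont. apply der_G, H. Qed.

Lemma der_V f : cont f -> forall t, is_derive (Vf f) t (Gf f t).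
Proof. intros H. apply FTC, cont_G, H. Qed.

Lemma cont_V f : cont f -> cont (Vf f).
Proof. intros H. eapply der_cont. apply der_V, H. Qed.

Lemma der_T f : cont f -> forall t, is_derive (Tf f) t (Vf f t).
Proof. intros H. apply FTC, cont_V, H. Qed.

Lemma cont_T f : cont f -> cont (Tf f).
Proof. intros H. eapply der_cont. apply der_T, H. Qed.

Lemma cont_S f : cont f -> cont (Sop f).
Proof.
  intros H s. unfold Sop. apply (continuous_comp (fun t => Rmax alph t) (Tf f)).
  - apply cont_Rmax.
  - apply cont_T, H.
Qed.

Lemma alph_facts : -1 < alph < 0 /\ a * exp c * (alph * alph) <= 1.
Proof.
  unfold alph. pose proof (exp_pos c). set (u := a * exp c).
  assert (0 < u) by (unfold u; nra).
  assert (0 < / (1 + u)) by (apply Rinv_0_lt_compat; lra).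
  assert (/ (1 + u) < 1) by (rewrite <- Rinv_1; apply Rinv_lt_contravar; lra).
  split; [lra|].
  replace (u * (- / (1 + u) * - / (1 + u))) with (u / ((1 + u) * (1 + u))) by (field; lra).
  apply Rle_div_l; nra.
Qed.

Definition Inv f := cont f /\ (forall s, alph <= s <= 0 -> Rabs (f s) <= 1) /\
                    (forall s, 0 <= s -> Rabs (f s) <= a * (s * s)).

Lemma Y_nonneg f : cont f -> forall s, 0 <= s -> 0 <= Yf f s.
Proof. intros H s Hs. apply POS; auto. apply cont_P, H. intros; apply powabs_nonneg. Qed.

Lemma Y_neg f : Inv f -> forall s, alph <= s <= 0 -> Rabs (Yf f s) <= 1.
Proof.
  intros [H [H1 H2]] s Hs. pose proof alph_facts.
  eapply Rle_trans; [apply (BL _ _ 1)|].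
  - apply cont_P, H.
  - intros r Hr. rewrite Rmin_right, Rmax_left in Hr by lra.
    rewrite Rabs_pos_eq by apply powabs_nonneg.
    eapply Rle_trans; [apply powabs_le_abs; auto|]; apply H1; lra.
  - rewrite Rabs_left1 by lra. lra.
Qed.

Lemma Y_up f : Inv f -> forall s, alph <= s -> - c * Yf f s <= c.
Proof.
  intros HI s Hs. destruct (Rle_dec 0 s).
  - pose proof (Y_nonneg f (proj1 HI) s r). nra.
  - pose proof (Y_neg f HI s ltac:(lra)). apply Rabs_le_between in H. nra.
Qed.

Lemma G_pos f t : 0 < Gf f t.
Proof. unfold Gf. pose proof (exp_pos (- c * Yf f t)). nra. Qed.

Lemma G_le f : Inv f -> forall s, alph <= s -> Gf f s <= a * exp c.
Proof.
  intros HI s Hs. unfold Gf. apply Rmult_le_compat_l; [lra|]. apply exp_mono_le, Y_up; auto.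
Qed.

Lemma G_le_a f : cont f -> forall s, 0 <= s -> Gf f s <= a.
Proof.
  intros H s Hs. unfold Gf. pose proof (Y_nonneg f H s Hs).
  rewrite <- (Rmult_1_r a) at 2. apply Rmult_le_compat_l; [lra|].
  rewrite <- exp_0. apply exp_mono_le. nra.
Qed.

Lemma Inv_S f : Inv f -> Inv (Sop f).
Proof.
  intros HI. pose proof HI as [H [H1 H2]]. pose proof alph_facts as [Ha1 Ha2].
  pose proof (exp_pos c).
  split; [apply cont_S, H|split].
  - intros s Hs. unfold Sop. rewrite Rmax_right by lra.
    eapply Rle_trans; [apply (BL _ _ (a * exp c * - alph))|].
    + apply cont_V, H.
    + intros r Hr. rewrite Rmin_right, Rmax_left in Hr by lra.
      eapply Rle_trans; [apply (BL _ _ (a * exp c))|].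
      * apply cont_G, H.
      * intros q Hq. rewrite Rmin_right, Rmax_left in Hq by lra.
        pose proof (G_pos f q). rewrite Rabs_pos_eq by lra. apply G_le; auto; lra.
      * rewrite Rabs_left1 by lra. apply Rmult_le_compat_l; nra.
    + rewrite Rabs_left1 by lra. nra.
  - intros s Hs. unfold Sop. rewrite Rmax_right by lra.
    eapply Rle_trans; [apply (BL _ _ (a * s))|].
    + apply cont_V, H.
    + intros r Hr. rewrite Rmin_left, Rmax_right in Hr by lra.
      eapply Rle_trans; [apply (BL _ _ a)|].
      * apply cont_G, H.
      * intros q Hq. rewrite Rmin_left, Rmax_right in Hq by lra.
        pose proof (G_pos f q). rewrite Rabs_pos_eq by lra. apply G_le_a; auto; lra.
      * rewrite Rabs_pos_eq by lra. apply Rmult_le_compat_l; lra.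
    + rewrite Rabs_pos_eq by lra. nra.
Qed.

Lemma Inv_bound f N : Inv f -> 0 <= N -> forall s, alph <= s <= N -> Rabs (f s) <= 1 + a * (N * N).
Proof.
  intros [H [H1 H2]] hN s Hs.
  assert (0 <= a * (N * N)) by (apply Rmult_le_pos; [lra|nra]).
  destruct (Rle_dec s 0).
  - pose proof (H1 s ltac:(lra)). lra.
  - pose proof (H2 s ltac:(lra)).
    assert (s * s <= N * N) by nra.
    assert (a * (s * s) <= a * (N * N)) by (apply Rmult_le_compat_l; lra). lra.
Qed.

Lemma CL N : 0 <= N -> exists L, 0 < L /\
  forall f g, Inv f -> Inv g -> forall e, 0 <= e ->
  (forall s, alph <= s <= N -> Rabs (f s - g s) <= e * exp (L * Rabs s)) ->
  forall t, alph <= t <= N -> Rabs (Tf f t - Tf g t) <= e / 2 * exp (L * Rabs t).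
Proof.
  intros hN. pose proof alph_facts as [Ha1 Ha2].
  set (M := 1 + a * (N * N)).
  assert (hM : 0 < M) by (unfold M; nra).
  set (Lp := p * Rpower M (p - 1)).
  assert (hLp : 0 <= Lp) by (unfold Lp; pose proof (exp_pos ((p-1) * ln M)); unfold Rpower; nra).
  pose proof (exp_pos c) as hec.
  set (K := a * exp c * c * Lp).
  assert (hK : 0 <= K) by (unfold K; apply Rmult_le_pos; [|lra]; apply Rmult_le_pos; [|lra]; nra).
  set (L := 1 + 2 * K).
  exists L. split; [unfold L; lra|].
  intros f g Hf Hg e he Hd.
  assert (sub : forall t, alph <= t <= N -> forall s, Rmin 0 t <= s <= Rmax 0 t -> alph <= s <= N).
  { intros t Ht s Hs. destruct (Rle_dec 0 t).
    - rewrite Rmin_left, Rmax_right in Hs by lra. lra.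
    - rewrite Rmin_right, Rmax_left in Hs by lra. lra. }
  assert (hL : 0 < L) by (unfold L; lra).
  pose proof Hf as [cf _]. pose proof Hg as [cg _].
  assert (Sa : forall s, alph <= s <= N -> Rabs (powabs (f s) p - powabs (g s) p) <= (Lp * e) * exp (L * Rabs s)).
  { intros s Hs.
    pose proof (powabs_lip p M (f s) (g s) hp hM (Inv_bound f N Hf hN s Hs) (Inv_bound g N Hg hN s Hs)) as HH.
    fold Lp in HH. eapply Rle_trans; [exact HH|].
    rewrite Rmult_assoc. apply Rmult_le_compat_l; auto. }
  assert (Sb : forall t, alph <= t <= N -> Rabs (Yf f t - Yf g t) <= (Lp * e) / L * exp (L * Rabs t)).
  { intros t Ht. unfold Yf. apply IL_diff; try apply cont_P; auto; [apply Rmult_le_pos; auto|].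
    intros s Hs. apply Sa. apply (sub t Ht s Hs). }
  assert (Sc : forall t, alph <= t <= N -> Rabs (Gf f t - Gf g t) <= (K * e / L) * exp (L * Rabs t)).
  { intros t Ht. unfold Gf.
    replace (a * exp (- c * Yf f t) - a * exp (- c * Yf g t)) with (a * (exp (- c * Yf f t) - exp (- c * Yf g t))) by ring.
    rewrite Rabs_mult, (Rabs_pos_eq a) by lra.
    eapply Rle_trans.
    { apply Rmult_le_compat_l; [lra|]. apply exp_lip; apply Y_up; auto; lra. }
    replace (- c * Yf f t - - c * Yf g t) with (c * (Yf g t - Yf f t)) by ring.
    rewrite Rabs_mult, (Rabs_pos_eq c) by lra.
    rewrite <- Rabs_Ropp, Ropp_minus_distr.
    pose proof (Sb t Ht).
    replace (K * e / L * exp (L * Rabs t)) with (a * exp c * c * ((Lp * e) / L * exp (L * Rabs t))) by (unfold K; field; lra).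
    rewrite <- !Rmult_assoc.
    rewrite (Rmult_assoc (a * exp c * c)).
    apply Rmult_le_compat_l; [|exact H].
    apply Rmult_le_pos; [|lra]. apply Rmult_le_pos; lra. }
  assert (Sd : forall t, alph <= t <= N -> Rabs (Vf f t - Vf g t) <= (K * e / L) / L * exp (L * Rabs t)).
  { intros t Ht. unfold Vf. apply IL_diff; try apply cont_G; auto.
    - apply Rdiv_le_0_compat; [apply Rmult_le_pos|]; lra.
    - intros s Hs. apply Sc. apply (sub t Ht s Hs). }
  intros t Ht.
  eapply Rle_trans.
  { unfold Tf. apply (IL_diff _ _ t L (K * e / L / L)); try apply cont_V; auto.
    - apply Rdiv_le_0_compat; [apply Rdiv_le_0_compat; [apply Rmult_le_pos|]|]; lra.
    - intros s Hs. apply Sd. apply (sub t Ht s Hs). }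
  apply Rmult_le_compat_r; [left; apply exp_pos|].
  replace (K * e / L / L / L) with ((K / L) * (e / (L * L))) by (field; lra).
  assert (K / L <= 1 / 2) by (apply Rle_div_l; unfold L; lra).
  assert (e / (L * L) <= e) by (apply Rle_div_l; [nra|]; unfold L in *; nra).
  assert (0 <= K / L) by (apply Rdiv_le_0_compat; lra).
  assert (0 <= e / (L * L)) by (apply Rdiv_le_0_compat; nra).
  nra.
Qed.

Fixpoint xs (n : nat) : R -> R :=
  match n with O => fun _ => 0 | Datatypes.S k => Sop (xs k) end.

Lemma Inv_zero : Inv (fun _ => 0).
Proof.
  split; [intros s; apply continuous_const|split]; intros s Hs; rewrite Rabs_R0; [lra|].
  apply Rmult_le_pos; [lra|nra].
Qed.

Lemma Inv_xs n : Inv (xs n).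
Proof. induction n; simpl; [apply Inv_zero| apply Inv_S, IHn]. Qed.

Lemma xs_S n t : alph <= t -> xs (Datatypes.S n) t = Tf (xs n) t.
Proof. intros H. simpl. unfold Sop. rewrite Rmax_right by lra. reflexivity. Qed.

Lemma Dk N : 0 <= N -> exists K0, 0 <= K0 /\
  forall n t, alph <= t <= N -> Rabs (xs (Datatypes.S n) t - xs n t) <= K0 * (1/2)^n.
Proof.
  intros hN. destruct (CL N hN) as [L [hL HC]]. pose proof alph_facts as [Ha1 Ha2].
  set (M := 1 + a * (N * N)).
  assert (hM : 0 < M) by (unfold M; nra).
  assert (D : forall n t, alph <= t <= N -> Rabs (xs (Datatypes.S n) t - xs n t) <= (M * (1/2)^n) * exp (L * Rabs t)).
  { induction n; intros t Ht.
    - simpl (xs 0). rewrite Rminus_0_r. simpl pow. rewrite Rmult_1_r.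
      pose proof (Inv_bound (xs 1) N (Inv_xs 1) hN t Ht).
      assert (1 <= exp (L * Rabs t)) by (rewrite <- exp_0; apply exp_mono_le; pose proof (Rabs_pos t); nra).
      fold M in H. nra.
    - rewrite (xs_S (Datatypes.S n)), (xs_S n) by lra.
      eapply Rle_trans; [apply (HC _ _ (Inv_xs _) (Inv_xs _) (M * (1/2)^n))|].
      + apply Rmult_le_pos; [lra| apply pow_le; lra].
      + intros s Hs. apply IHn; auto.
      + exact Ht.
      + simpl pow. right. field. }
  exists (M * exp (L * (N + 1))). split.
  - pose proof (exp_pos (L * (N + 1))). nra.
  - intros n t Ht. eapply Rle_trans; [apply D; auto|].
    assert (Rabs t <= N + 1) by (apply Rabs_le; lra).
    assert (exp (L * Rabs t) <= exp (L * (N + 1))) by (apply exp_mono_le; nra).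
    assert (0 <= M * (1/2)^n) by (apply Rmult_le_pos; [lra| apply pow_le; lra]).
    replace (M * exp (L * (N + 1)) * (1 / 2) ^ n) with ((M * (1/2)^n) * exp (L * (N + 1))) by ring.
    apply Rmult_le_compat_l; auto.
Qed.

Lemma tele N : 0 <= N -> exists K1, 0 <= K1 /\
  forall n m t, alph <= t <= N -> Rabs (xs (n + m) t - xs n t) <= K1 * (1/2)^n.
Proof.
  intros hN. destruct (Dk N hN) as [K0 [hK0 HD]].
  exists (2 * K0). split; [lra|].
  intros n m t Ht.
  assert (G : Rabs (xs (n + m) t - xs n t) <= 2 * K0 * ((1/2)^n - (1/2)^(n+m))).
  { induction m.
    - rewrite Nat.add_0_r, Rminus_diag, Rabs_R0, Rminus_diag. lra.
    - rewrite Nat.add_succ_r.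
      pose proof (HD (n + m)%nat t Ht).
      replace (xs (Datatypes.S (n + m)) t - xs n t) with ((xs (Datatypes.S (n + m)) t - xs (n + m) t) + (xs (n + m) t - xs n t)) by ring.
      eapply Rle_trans; [apply Rabs_triang|].
      simpl pow. lra. }
  eapply Rle_trans; [exact G|].
  assert (0 <= (1/2)^(n+m)) by (apply pow_le; lra).
  nra.
Qed.

Lemma small_geom K eps : 0 < eps -> exists n, Rabs K * (1/2)^n < eps.
Proof.
  intros he. destruct (pow_lt_1_zero (1/2) ltac:(rewrite Rabs_pos_eq; lra) (eps / (Rabs K + 1))) as [n Hn].
  { apply Rdiv_lt_0_compat; [lra| pose proof (Rabs_pos K); lra]. }
  exists n. specialize (Hn n (le_n n)). rewrite Rabs_pos_eq in Hn by (apply pow_le; lra).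
  pose proof (Rabs_pos K).
  assert (0 <= (1/2)^n) by (apply pow_le; lra).
  apply Rmult_lt_compat_l with (r := Rabs K + 1) in Hn; [|lra].
  replace ((Rabs K + 1) * (eps / (Rabs K + 1))) with eps in Hn by (field; lra).
  nra.
Qed.

Lemma le_geom x B K : (forall n, x <= B + K * (1/2)^n) -> x <= B.
Proof.
  intros H. destruct (Rle_dec x B) as [h|h]; [exact h|exfalso].
  destruct (small_geom K (x - B)) as [n Hn]; [lra|].
  specialize (H n). assert (K <= Rabs K) by apply Rle_abs.
  assert (0 <= (1/2)^n) by (apply pow_le; lra). nra.
Qed.

Lemma zero_geom d K : (forall n, Rabs d <= K * (1/2)^n) -> d = 0.
Proof.
  intros H. assert (Rabs d <= 0) by (apply (le_geom _ 0 K); intros n; specialize (H n); lra).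
  pose proof (Rabs_pos d). apply Rabs_eq_0. lra.
Qed.

Definition z t := real (Lim_seq (fun k => xs k (Rmax alph t))).

Lemma conv N : 0 <= N -> exists K1, 0 <= K1 /\ forall t, t <= N ->
  is_lim_seq (fun k => xs k (Rmax alph t)) (z t) /\
  forall n, Rabs (z t - xs n (Rmax alph t)) <= K1 * (1/2)^n.
Proof.
  intros hN. destruct (tele N hN) as [K1 [hK1 HT]]. pose proof alph_facts as [Ha1 Ha2].
  exists K1. split; [exact hK1|]. intros t Ht.
  set (t' := Rmax alph t).
  assert (Ht' : alph <= t' <= N) by (unfold t', Rmax; destruct Rle_dec; lra).
  set (u := fun k => xs k t').
  assert (EX : ex_finite_lim_seq u).
  { apply ex_lim_seq_cauchy_corr. intros eps.
    destruct (small_geom (2 * K1) eps) as [n0 Hn0]; [apply cond_pos|].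
    rewrite Rabs_pos_eq in Hn0 by lra.
    exists n0. intros n m Hn Hm.
    pose proof (HT n0 (n - n0)%nat t' Ht'). pose proof (HT n0 (m - n0)%nat t' Ht').
    replace (n0 + (n - n0))%nat with n in * by lia.
    replace (n0 + (m - n0))%nat with m in * by lia.
    unfold u. replace (xs n t' - xs m t') with ((xs n t' - xs n0 t') - (xs m t' - xs n0 t')) by ring.
    eapply Rle_lt_trans; [apply Rabs_triang|]. rewrite Rabs_Ropp. lra. }
  destruct EX as [l Hl].
  assert (Hz : z t = l) by (unfold z; fold t'; fold u; rewrite (is_lim_seq_unique u l Hl); reflexivity).
  rewrite Hz. split; [exact Hl|].
  intros n.
  assert (L1 : is_lim_seq (fun m => Rabs (u (m + n)%nat - u n)) (Rabs (l - u n))).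
  { apply (is_lim_seq_abs _ (l - u n)).
    apply (is_lim_seq_minus' _ (fun _ => u n)); [|apply is_lim_seq_const].
    apply (is_lim_seq_incr_n u n l). exact Hl. }
  assert (L2 := is_lim_seq_const (K1 * (1/2)^n)).
  assert (HB : forall m, Rabs (u (m + n)%nat - u n) <= K1 * (1/2)^n).
  { intros m. unfold u. rewrite Nat.add_comm. apply HT; exact Ht'. }
  pose proof (is_lim_seq_le _ _ _ _ HB L1 L2) as LE.
  simpl in LE. fold t' u. exact LE.
Qed.

Lemma z_cont : cont z.
Proof.
  intros t0. set (N := Rabs t0 + 1).
  assert (hN : 0 <= N) by (unfold N; pose proof (Rabs_pos t0); lra).
  destruct (conv N hN) as [K1 [hK1 HC]].
  apply filterlim_locally. intros eps.
  destruct (small_geom K1 (eps / 3)) as [n Hn]; [pose proof (cond_pos eps); lra|].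
  rewrite Rabs_pos_eq in Hn by lra.
  set (g := fun t => xs n (Rmax alph t)).
  assert (Cg : continuous g t0).
  { apply (continuous_comp (fun t => Rmax alph t) (xs n)); [apply cont_Rmax| apply (proj1 (Inv_xs n))]. }
  pose proof (proj1 (filterlim_locally (F := locally t0) g (g t0)) Cg) as Cg'. clear Cg. rename Cg' into Cg.
  assert (he3 : 0 < eps / 3) by (pose proof (cond_pos eps); lra).
  destruct (Cg (mkposreal _ he3)) as [d Hd].
  assert (hd : 0 < Rmin d 1) by (apply Rmin_pos; [apply cond_pos|lra]).
  exists (mkposreal _ hd). intros y Hy.
  change (Rabs (y - t0) < Rmin d 1) in Hy.
  change (Rabs (z y - z t0) < eps).
  assert (Hy1 : Rabs (y - t0) < d) by (pose proof (Rmin_l d 1); lra).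
  assert (Hy2 : Rabs (y - t0) < 1) by (pose proof (Rmin_r d 1); lra).
  specialize (Hd y Hy1). change (Rabs (g y - g t0) < eps / 3) in Hd.
  assert (yN : y <= N) by (unfold N; apply Rabs_def2 in Hy2; pose proof (Rle_abs t0); lra).
  assert (tN : t0 <= N) by (unfold N; pose proof (Rle_abs t0); lra).
  destruct (HC y yN) as [_ B1]. destruct (HC t0 tN) as [_ B2].
  specialize (B1 n). specialize (B2 n). fold g in B1, B2.
  replace (z y - z t0) with ((z y - g y) + (g y - g t0) - (z t0 - g t0)) by ring.
  eapply Rle_lt_trans; [apply Rabs_triang|]. rewrite Rabs_Ropp.
  eapply Rle_lt_trans; [apply Rplus_le_compat_r, Rabs_triang|]. unfold g in *; lra.
Qed.

Lemma Inv_z : Inv z.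
Proof.
  pose proof alph_facts as [Ha1 Ha2].
  split; [apply z_cont|split].
  - intros s Hs. destruct (conv 0 ltac:(lra)) as [K1 [hK1 HC]].
    destruct (HC s ltac:(lra)) as [_ B]. rewrite Rmax_right in B by lra.
    apply (le_geom _ _ K1). intros n. specialize (B n).
    pose proof (proj1 (proj2 (Inv_xs n)) s Hs).
    pose proof (Rabs_triang_inv (z s) (xs n s)). lra.
  - intros s Hs. destruct (conv s Hs) as [K1 [hK1 HC]].
    destruct (HC s ltac:(lra)) as [_ B]. rewrite Rmax_right in B by lra.
    apply (le_geom _ _ K1). intros n. specialize (B n).
    pose proof (proj2 (proj2 (Inv_xs n)) s Hs).
    pose proof (Rabs_triang_inv (z s) (xs n s)). lra.
Qed.

Lemma z_fix t : alph <= t -> z t = Tf z t.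
Proof.
  intros Ht. pose proof alph_facts as [Ha1 Ha2].
  set (N := Rabs t + 1).
  assert (hN : 0 <= N) by (unfold N; pose proof (Rabs_pos t); lra).
  assert (tN : alph <= t <= N) by (unfold N; pose proof (Rle_abs t); lra).
  destruct (conv N hN) as [K1 [hK1 HC]].
  destruct (CL N hN) as [L [hL HL]].
  assert (E : z t - Tf z t = 0).
  { apply (zero_geom _ (K1 * (1 + exp (L * Rabs t) / 2))). intros n.
    assert (hg : 0 <= (1/2)^n) by (apply pow_le; lra).
    assert (H1 : Rabs (Tf z t - Tf (xs n) t) <= K1 * (1/2)^n / 2 * exp (L * Rabs t)).
    { apply HL; [apply Inv_z| apply Inv_xs| apply Rmult_le_pos; lra | | exact tN].
      intros s Hs. destruct (HC s ltac:(lra)) as [_ B]. rewrite Rmax_right in B by lra.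
      specialize (B n).
      assert (1 <= exp (L * Rabs s)) by (rewrite <- exp_0; apply exp_mono_le; pose proof (Rabs_pos s); nra).
      assert (0 <= K1 * (1/2)^n) by (apply Rmult_le_pos; lra).
      nra. }
    destruct (HC t ltac:(lra)) as [_ B]. rewrite Rmax_right in B by lra.
    specialize (B (Datatypes.S n)). rewrite xs_S in B by lra. simpl pow in B.
    replace (z t - Tf z t) with ((z t - Tf (xs n) t) - (Tf z t - Tf (xs n) t)) by ring.
    eapply Rle_trans; [apply Rabs_triang|]. rewrite Rabs_Ropp.
    assert (0 <= K1 * (1/2)^n) by (apply Rmult_le_pos; lra).
    nra. }
  lra.
Qed.

Theorem main_sec :
  exists (alpha : R) (x x1 x2 : R -> R),
    alpha < 0 /\
    (forall t, alpha < t ->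
       is_derive x t (x1 t) /\ is_derive x1 t (x2 t) /\
       is_derive x2 t (- (c * powabs (x t) p * x2 t))) /\
    x 0 = 0 /\ x1 0 = 0 /\ x2 0 = a.
Proof.
  pose proof alph_facts as [Ha1 Ha2].
  exists alph, (Tf z), (Vf z), (Gf z). split; [lra|split; [|split; [|split]]].
  - intros t Ht. split; [apply der_T, z_cont|split; [apply der_V, z_cont|]].
    rewrite <- (z_fix t) by lra. apply der_G, z_cont.
  - unfold Tf. rewrite RInt_point. reflexivity.
  - unfold Vf. rewrite RInt_point. reflexivity.
  - unfold Gf, Yf. rewrite RInt_point. change (a * exp (- c * 0) = a).
    rewrite Rmult_0_r, exp_0. ring.
Qed.

End ODE.

Theorem lemma1 (p c a : R) (hp : 1 <= p) (hc : 0 < c) (ha : 0 < a) :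
  exists (alpha : R) (x x1 x2 : R -> R),
    alpha < 0 /\
    (forall t, alpha < t ->
       is_derive x t (x1 t) /\ is_derive x1 t (x2 t) /\
       is_derive x2 t (- (c * powabs (x t) p * x2 t))) /\
    x 0 = 0 /\ x1 0 = 0 /\ x2 0 = a.
Proof.
  apply main_sec; assumption.
Qed.
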